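(* Let $p$ be an odd prime, and let $k,m$ be positive integers with $km=p-1$. Let $G$ be the multiplicative group $\{r+p\mathbb{Z}: r=1,\ldots,p-1\}$ and $H$ its subgroup $\{x^m+p\mathbb{Z}: x=1,\ldots,p-1\}$ of order $k$. Suppose that the $m$ distinct cosets of $H$ in $G$ are $$\{a_{1j}+p\mathbb{Z}: j=1,\ldots,k\},\ \ldots,\ \{a_{mj}+p\mathbb{Z}: j=1,\ldots,k\}$$ with $1\le a_{i1}<\cdots<a_{ik}\le p-1$ for all $i=1,\ldots,m$. Then $$\prod_{i=1}^m\prod_{1\le s<t\le k}(a_{it}-a_{is})\equiv\begin{cases}(-1)^{\frac{p+1}2\cdot\frac{p-1}{2m}+\lfloor\frac{p-3}4\rfloor}\left(\frac{p-1}2\right)!\pmod p&\text{if } p\equiv1\pmod{2m},\\(-1)^{\frac{p+1}2\cdot\frac{p-1-m}{2m}}\pmod p&\text{if } p\equiv1+m\pmod{2m}.\end{cases}$$ *)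

(* Defs.v *)
From mathcomp Require Import all_boot all_order all_algebra.
Set Implicit Arguments. Unset Strict Implicit. Unset Printing Implicit Defensive.

(* Elements of G = (Z/pZ)^* are represented by their least positive
   residues r with 1 <= r <= p-1. *)

Definition inH (p m r : nat) : bool :=
  [exists x : 'I_p, (0 < x) && (r == (x ^ m) %% p)].

Definition in_coset (p m g r : nat) : bool :=
  (0 < r < p) && [exists h : 'I_p, inH p m h && (r == (g * h) %% p)].

Definition is_coset_of_H (p m : nat) (S : nat -> Prop) : Prop :=
  exists g : nat, 0 < g < p /\ forall r, S r <-> in_coset p m g r.

(* Main.v *)
Require Import Defs.
From mathcomp Require Import all_boot all_order all_algebra all_field.
From mathcomp Require Import zify ring lra.
Set Implicit Arguments. Unset Strict Implicit. Unset Printing Implicit Defensive.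
Import GRing.Theory Num.Theory.
Local Open Scope ring_scope.

Lemma prod_invol (T : finType) (R : comPzRingType) (s : T -> T) (f : T -> R) (c : R)
  (A : {set T}) :
  (forall x, x \in A -> [/\ s x \in A, s x != x, s (s x) = x & f x * f (s x) = c]) ->
  ~~ odd #|A| /\ \prod_(x in A) f x = c ^+ (#|A| %/ 2).
Proof.
move: {2}#|A| (leqnn #|A|) => N; elim: N A => [|N IH] A hA H.
  move: hA; rewrite leqn0 cards_eq0 => /eqP ->; by rewrite cards0 big_set0.
case: (set_0Vmem A) => [->|[x xA]]; first by rewrite cards0 big_set0.
have [sxA sxx ssx fc] := H x xA.
set A' := A :\ x :\ s x.
have sxA' : s x \in A :\ x by rewrite !inE sxx.
have cA : #|A| = (#|A'|.+2)%N.
  by rewrite (cardsD1 x A) xA (cardsD1 (s x) (A :\ x)) sxA'.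
have [IH1 IH2] : ~~ odd #|A'| /\ \prod_(y in A') f y = c ^+ (#|A'| %/ 2).
  apply: IH; first by move: hA; rewrite cA; lia.
  move=> y; rewrite !inE => /and3P [ysx yx yA].
  have [syA sy ssy fy] := H y yA.
  split => //; rewrite syA andbT.
  apply/andP; split; apply/negP => /eqP e.
    have : y = x by rewrite -ssy e ssx.
    by move=> ey; move: yx; rewrite ey eqxx.
  have : y = s x by rewrite -ssy e.
  by move=> ey; move: ysx; rewrite ey eqxx.
rewrite cA /= IH1; split => //.
rewrite (big_setD1 x) // (big_setD1 (s x)) //= IH2 mulrA fc.
have -> : ((#|A'|.+2) %/ 2 = (#|A'| %/ 2).+1)%N by lia.
by rewrite exprS.
Qed.

Section Fp.
Variable p : nat.
Hypothesis hp : prime p.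
Hypothesis hodd : odd p.
Local Notation F := 'F_p.
Definition v (x : F) : nat := nat_of_ord x.

Lemma vnat (n : nat) : v (n%:R : F) = (n %% p)%N.
Proof. exact: val_Fp_nat. Qed.

Lemma vlt (x : F) : (v x < p)%N.
Proof. case: x => /= i; by rewrite (Fp_cast hp). Qed.

Lemma vK (x : F) : (v x)%:R = x.
Proof. apply: val_inj; change (v (v x)%:R = v x); by rewrite vnat modn_small // vlt. Qed.

Lemma nat_inj (x y : nat) : (x < p)%N -> (y < p)%N -> (x%:R : F) = y%:R -> x = y.
Proof. by move=> hx hy /(congr1 v); rewrite !vnat !modn_small. Qed.

Lemma nat_eq0 (x : nat) : (x < p)%N -> ((x%:R : F) == 0) = (x == 0)%N.
Proof.
move=> hx; apply/eqP/eqP => [h|->] //.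
apply: nat_inj => //; first exact: prime_gt0.
Qed.

Lemma v_eq0 (x : F) : (v x == 0)%N = (x == 0).
Proof. by rewrite -(nat_eq0 (vlt x)) vK. Qed.

Lemma p_gt2 : (2 < p)%N.
Proof.
have := prime_gt1 hp; case: p hodd => [|[|[|q]]] //.
Qed.

Lemma two_neq0 : (2%:R : F) != 0.
Proof. by rewrite nat_eq0 ?p_gt2. Qed.

Lemma m1_neq1 : (-1 : F) != 1.
Proof.
apply/eqP => h; move: two_neq0; rewrite -[2%:R]/(1 + 1 : F).
by rewrite -{1}h addNr eqxx.
Qed.

Lemma vN (x : F) : x != 0 -> v (- x) = (p - v x)%N.
Proof.
move=> hx.
have h1 : ((v x + v (-x))%:R : F) = 0 by rewrite natrD !vK subrr.
have h2 : ((v x + v (-x)) %% p = 0)%N by rewrite -vnat h1.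
have hx0 : (0 < v x)%N by rewrite lt0n v_eq0.
have hlt : (v x + v (-x) < 2 * p)%N by have := vlt x; have := vlt (-x); lia.
move/eqP: h2; rewrite -/(dvdn p _) => /dvdnP [c hc].
have : c = 1%N.
  case: c hc => [|[|c]] hc //; first lia.
  by move: hlt; rewrite hc; nia.
move=> c1; rewrite c1 mul1n in hc; lia.
Qed.


Lemma range_img (n : nat) : (n < p)%N ->
  [set x : F | (0 < v x <= n)%N] = [set ((nat_of_ord i).+1)%:R | i : 'I_n].
Proof.
move=> hn; apply/setP => x; rewrite !inE; apply/idP/imsetP.
  case/andP=> h0 h1; have hi : ((v x).-1 < n)%N by rewrite prednK.
  by exists (Ordinal hi) => //=; rewrite prednK // vK.
case=> -[i hi] _ ->; rewrite vnat modn_small /=; lia.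
Qed.

Lemma range_inj (n : nat) : (n < p)%N ->
  injective (fun i : 'I_n => ((nat_of_ord i).+1)%:R : F).
Proof.
move=> hn [i hi] [j hj] /nat_inj /= h; apply: val_inj => /=; apply: succn_inj; apply: h; lia.
Qed.

Lemma range_card (n : nat) : (n < p)%N -> #|[set x : F | (0 < v x <= n)%N]| = n.
Proof. by move=> hn; rewrite range_img // card_imset ?card_ord //; exact: range_inj. Qed.

Lemma range_prod (n : nat) : (n < p)%N ->
  \prod_(x in [set x : F | (0 < v x <= n)%N]) x = (n`!)%:R.
Proof.
move=> hn; rewrite range_img // big_imset /=; last by move=> i j _ _; apply: range_inj.
rewrite fact_prod big_add1 /= big_mkord natr_prod.
by apply: eq_big => // i; rewrite inE.
Qed.

Lemma nz_range : [set x : F | x != 0] = [set x : F | (0 < v x <= p.-1)%N].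
Proof.
apply/setP => x; rewrite !inE lt0n v_eq0; have := vlt x; case: (x == 0) => //=; lia.
Qed.

Lemma wilsonF : \prod_(x in [set x : F | x != 0]) x = -1.
Proof.
have hp1 : (p.-1 < p)%N by have := prime_gt1 hp; lia.
rewrite nz_range range_prod //.
have := (Wilson (prime_gt1 hp)); rewrite hp => /esym/dvdnP [c hc].
apply/eqP; rewrite -subr_eq0 opprK -(natrD _ _ 1) addn1 hc natrM.
by rewrite pchar_Fp_0 // mulr0.
Qed.

Lemma card_nz : #|[set x : F | x != 0]| = p.-1.
Proof. by rewrite nz_range range_card //; have := prime_gt1 hp; lia. Qed.

Lemma fermatF (x : F) : x != 0 -> x ^+ p.-1 = 1.
Proof.
move=> hx; have := expf_card x.
have -> : #|F| = (p.-1).+1 by rewrite (card_Fp hp); have := prime_gt1 hp; lia.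
rewrite exprS => h; apply: (mulfI hx); by rewrite h mulr1.
Qed.

Definition nn := ((p - 1) %/ 2)%N.
Lemma p_nn : (p - 1 = 2 * nn)%N.
Proof. rewrite /nn; have h2 : (p %% 2 = 1)%N by rewrite modn2 hodd.
have := prime_gt1 hp; lia. Qed.
Lemma pm1 : p.-1 = (2 * nn)%N.
Proof. by rewrite -p_nn subn1. Qed.

Definition Ah (h : F) := [set x : F | (x != 0) && (v x < v (x * h)%R)%N].
Definition Bh (h : F) := [set x : F | (x != 0) && (v (x * h)%R < v x)%N].
Definition g (h : F) := \prod_(x in Ah h) (x * (h - 1)).

Lemma subl a b c : (b < a)%N -> (a < c)%N -> (c - a < c - b)%N.
Proof. lia. Qed.

Lemma AB_opp h : h != 0 -> Bh h = [set - x | x in Ah h].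
Proof.
move=> h0; apply/setP => y; rewrite !inE; apply/idP/imsetP.
  case/andP => y0 hy; exists (- y); last by rewrite opprK.
  rewrite inE oppr_eq0 y0 andTb mulNr !vN ?mulf_neq0 //.
  exact: subl hy (vlt _).
case=> x; rewrite inE => /andP [x0 hx] ->.
rewrite oppr_eq0 x0 andTb mulNr !vN ?mulf_neq0 //.
exact: subl hx (vlt _).
Qed.

Lemma AB_U h : h != 1 -> Ah h :|: Bh h = [set x : F | x != 0].
Proof.
move=> h1; apply/setP => x; rewrite !inE -andb_orr.
case: (eqVneq x 0) => [-> //|x0].
rewrite andTb -neq_ltn.
apply/negP => /eqP e; have e2 : x * h = x * 1 by rewrite mulr1; apply: val_inj.
by move: h1; rewrite (mulfI x0 e2) eqxx.
Qed.

Lemma AB_disj h : [disjoint Ah h & Bh h].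
Proof.
rewrite -setI_eq0; apply/eqP/setP => x; rewrite !inE; lia.
Qed.

Lemma card_AB h : h != 0 -> h != 1 -> #|Ah h| = nn /\ #|Bh h| = nn.
Proof.
move=> h0 h1.
have e1 : #|Bh h| = #|Ah h| by rewrite AB_opp // card_imset //; exact: oppr_inj.
have := cardsU (Ah h) (Bh h).
rewrite AB_U // card_nz pm1.
have : #|Ah h :&: Bh h| = 0%N by apply/eqP; rewrite cards_eq0 setI_eq0 AB_disj.
move=> ->; lia.
Qed.

Lemma g_pair h : h != 0 -> h != 1 -> g h * g h^-1 = (-1) ^+ nn.+1.
Proof.
move=> h0 h1.
have hi : h^-1 != 0 by rewrite invr_eq0.
have eA : Ah h^-1 = [set x * h | x in Bh h].
  apply/setP => y; rewrite !inE; apply/idP/imsetP.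
    case/andP => y0 hy; exists (y * h^-1); last by rewrite -mulrA mulVf ?mulr1.
    by rewrite inE mulf_neq0 // andTb -mulrA mulVf ?mulr1.
  case=> x; rewrite inE => /andP [x0 hx] ->.
  by rewrite mulf_neq0 // andTb -mulrA mulfV ?mulr1.
have [cA cB] := card_AB h0 h1.
rewrite /g eA big_imset /=; last by move=> x y _ _; apply: mulIf.
rewrite !prodrMr cA cB.
have : \prod_(x in Ah h) x * \prod_(x in Bh h) x = -1.
  by rewrite -bigU ?AB_disj //= -wilsonF -(AB_U h1); apply: eq_bigl => x; rewrite !inE.
move=> e.
have hf : (h - 1) ^+ (2 * nn) = 1 by rewrite -pm1 fermatF // subr_eq0.
have e2 : (h - 1) * h * (h^-1 - 1) = - (h - 1) ^+ 2 by field.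
transitivity ((\prod_(x in Ah h) x * \prod_(x in Bh h) x) * ((h - 1) * h * (h^-1 - 1)) ^+ nn).
  by rewrite !exprMn; ring.
by rewrite e e2 -[-(h-1)^+2]mulN1r exprMn -exprM hf mulr1 exprS.
Qed.

Lemma inL x : (x \in Ah (-1)) = (0 < v x <= nn)%N.
Proof.
rewrite inE mulrN1; case: (eqVneq x 0) => [->|x0].
  by [].
have := p_nn; have := vlt x; have : (0 < v x)%N by rewrite lt0n v_eq0.
rewrite andTb vN // => *; apply/idP/idP => ?; lia.
Qed.

Lemma L_opp z : z != 0 -> (- z \in Ah (-1)) = ~~ (z \in Ah (-1)).
Proof.
move=> z0; rewrite !inL vN //.
have := p_nn; have := vlt z; have : (0 < v z)%N by rewrite lt0n v_eq0.
lia.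
Qed.

Lemma v2 x : (2 * v x < p)%N -> v (2%:R * x) = (2 * v x)%N.
Proof. by move=> h; rewrite -{1}[x]vK -natrM vnat modn_small. Qed.

Lemma prod_sign (A : {set F}) (c : pred F) :
  \prod_(x in A) (if c x then 1 else -1 : F) = (-1) ^+ #|[set x in A | ~~ c x]|.
Proof.
rewrite -prodr_const (bigID c) /= big1 ?mul1r; last by move=> x /andP [_ ->].
apply: eq_big => [x|x /andP [_ /negbTE ->]] //; by rewrite !inE.
Qed.

Lemma g_m1 : g (-1) = (-1) ^+ (nn %/ 2) * (nn`!)%:R.
Proof.
set L := Ah (-1).
pose phi x := if - (2%:R * x) \in L then - (2%:R * x) else 2%:R * x.
have e1 : g (-1) = \prod_(x in L) ((if - (2%:R * x) \in L then 1 else -1) * phi x).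
  apply: eq_bigr => x _; rewrite /phi; case: ifP => _; rewrite ?mul1r; ring.
have phiL : forall x, x \in L -> phi x \in L.
  move=> x xL; rewrite /phi; case: ifP => // /negbT.
  have x0 : x != 0 by move: xL; rewrite inE => /andP [].
  by rewrite L_opp ?negbK // mulf_neq0 // two_neq0.
have phiI : {in L &, injective phi}.
  move=> x y xL yL; rewrite /phi.
  have x0 : x != 0 by move: xL; rewrite inE => /andP [].
  have y0 : y != 0 by move: yL; rewrite inE => /andP [].
  have t2 := mulfI two_neq0.
  case: ifP => hx; case: ifP => hy.
  - by move/oppr_inj/t2.
  - move=> e; have : y = - x by apply: t2; rewrite mulrN -e.
    by move=> ey; move: yL; rewrite ey L_opp // xL.
  - move=> e; have : x = - y by apply: t2; rewrite mulrN e.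
    by move=> ex; move: xL; rewrite ex L_opp // yL.
  - by move/t2.
have eL : [set phi x | x in L] = L.
  apply/eqP; rewrite eqEcard card_in_imset // leqnn andbT.
  by apply/subsetP => y /imsetP [x xL ->]; apply: phiL.
have e2 : \prod_(x in L) phi x = \prod_(x in L) x.
  by rewrite -{2}eL big_imset.
rewrite e1 big_split /= e2 prod_sign.
have e3 : \prod_(x in L) x = (nn`!)%:R.
  rewrite -range_prod; last by have := p_nn; have := prime_gt1 hp; lia.
  by apply: eq_bigl => x; rewrite inL inE.
rewrite e3; congr (_ ^+ _ * _).
have -> : [set x in L | ~~ (- (2%:R * x) \in L)] = [set x : F | (0 < v x <= nn %/ 2)%N].
  apply/setP => x; rewrite [in LHS]in_set [in RHS]in_set.
  case: (eqVneq x 0) => [->|x0].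
    have v0 : v 0 = 0%N by apply/eqP; rewrite v_eq0.
    by rewrite inL v0.
  rewrite L_opp ?mulf_neq0 ?two_neq0 // negbK inL.
  have hv : (0 < v x)%N by rewrite lt0n v_eq0.
  have := p_nn; have := vlt x.
  case: (leqP (v x) nn) => hx.
    move=> h1 h2; rewrite inL v2; last by lia.
    apply/idP/idP => ?; lia.
  move=> h1 h2; apply/idP/idP => ?; lia.
rewrite range_card //; have := p_nn; have := prime_gt1 hp; lia.
Qed.

Variable m : nat.
Definition HF : {set F} := [set z : F | (z != 0) && [exists w : F, (w != 0) && (z == w ^+ m)]].

Lemma HF0 z : z \in HF -> z != 0.
Proof. by rewrite inE => /andP []. Qed.

Lemma HF1 : 1 \in HF.
Proof. rewrite inE oner_neq0 /=; apply/existsP; exists 1; by rewrite oner_neq0 expr1n. Qed.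

Lemma HFM z1 z2 : z1 \in HF -> z2 \in HF -> z1 * z2 \in HF.
Proof.
rewrite !inE => /andP [z10 /existsP [w1 /andP [w10 /eqP e1]]] /andP [z20 /existsP [w2 /andP [w20 /eqP e2]]].
rewrite mulf_neq0 //=; apply/existsP; exists (w1 * w2); by rewrite mulf_neq0 //= e1 e2 exprMn.
Qed.

Lemma HFV z : z \in HF -> z^-1 \in HF.
Proof.
rewrite !inE => /andP [z0 /existsP [w /andP [w0 /eqP e]]].
rewrite invr_eq0 z0 /=; apply/existsP; exists w^-1; by rewrite invr_eq0 w0 /= e exprVn.
Qed.

Lemma HFD z1 z2 : z1 \in HF -> z2 \in HF -> z1 / z2 \in HF.
Proof. by move=> h1 h2; apply: HFM => //; apply: HFV. Qed.

Lemma natmod_F (r x : nat) : (r < p)%N -> (r == x %% p)%N = ((r%:R : F) == x%:R).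
Proof.
move=> hr; apply/eqP/eqP => [->|e]; first by rewrite Fp_nat_mod.
by rewrite -(modn_small hr) -!vnat e.
Qed.

Lemma inH_HF r : (r < p)%N -> inH p m r = ((r%:R : F) \in HF).
Proof.
move=> hr; rewrite /inH; apply/existsP/idP.
  case=> x /andP [x0 /eqP e].
  have xF0 : (x%:R : F) != 0 by rewrite nat_eq0 // -lt0n.
  have : (r%:R : F) = (x%:R) ^+ m. rewrite e (Fp_nat_mod hp). exact: natrX.
  move=> e2; rewrite inE e2 expf_neq0 //=; apply/existsP; exists x%:R; by rewrite xF0 /=.
rewrite inE => /andP [z0 /existsP [w /andP [w0 /eqP e]]].
exists (Ordinal (vlt w)); rewrite /= lt0n v_eq0 w0 /= natmod_F // natrX vK e //.
Qed.

Lemma in_coset_F g r : (0 < g < p)%N ->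
  in_coset p m g r = (0 < r < p)%N && ((r%:R / g%:R : F) \in HF).
Proof.
move=> /andP [g0 gp]; rewrite /in_coset.
case hr: (0 < r < p)%N => //=; move/andP: hr => [r0 rp].
have gF : (g%:R : F) != 0 by rewrite nat_eq0 // -lt0n.
apply/existsP/idP.
  case=> h /andP [hH /eqP e].
  rewrite inH_HF // in hH.
  have : (r%:R : F) = g%:R * h%:R by rewrite e (Fp_nat_mod hp); exact: natrM.
  by move=> ->; rewrite mulrAC divff // mul1r.
move=> zH; pose z : F := r%:R / g%:R; exists (Ordinal (vlt z)).
have ez : nat_of_ord (Ordinal (vlt z)) = v z by [].
rewrite ez inH_HF ?vlt // vK zH andTb natmod_F // natrM vK /z mulrC divfK //.
Qed.


Variables (k : nat) (a : 'I_m -> 'I_k -> nat).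
Hypotheses (hk : (0 < k)%N) (hm : (0 < m)%N) (hkm : (k * m = p - 1)%N)
  (ha_range : forall i j, (1 <= a i j <= p - 1)%N)
  (ha_incr : forall i (s t : 'I_k), (s < t)%N -> (a i s < a i t)%N)
  (ha_coset : forall i, is_coset_of_H p m (fun r => exists j, a i j = r))
  (ha_distinct : forall i1 i2 : 'I_m,
      (forall r, (exists j, a i1 j = r) <-> (exists j, a i2 j = r)) -> i1 = i2).

Local Notation i_ x := (x%:R : F).

Lemma a_lt i j : (a i j < p)%N.
Proof. have := ha_range i j; have := prime_gt1 hp; lia. Qed.
Lemma a_gt0 i j : (0 < a i j)%N.
Proof. have := ha_range i j; lia. Qed.
Lemma a_nz i j : i_ (a i j) != 0.
Proof. by rewrite nat_eq0 ?a_lt // -lt0n a_gt0. Qed.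
Lemma v_a i j : v (i_ (a i j)) = a i j.
Proof. by rewrite vnat modn_small // a_lt. Qed.

Lemma a_inj i : injective (a i).
Proof.
move=> s t e; apply: val_inj; case: (ltngtP s t) => h //.
  by have := ha_incr i h; rewrite e ltnn.
by have := ha_incr i h; rewrite e ltnn.
Qed.


Lemma coset_char i s r :
  (exists j, a i j = r) <-> (0 < r < p)%N /\ (i_ r / i_ (a i s) \in HF).
Proof.
have [g [hg H]] := ha_coset i.
have gF : i_ g != 0 by case/andP: hg => g0 gp; rewrite nat_eq0 // -lt0n.
have hs : i_ (a i s) / i_ g \in HF.
  by have := (H (a i s)).1 (ex_intro _ s erefl); rewrite in_coset_F // => /andP [].
rewrite H in_coset_F //; split.
  case/andP => -> hr; split => //.
  have -> : i_ r / i_ (a i s) = (i_ r / i_ g) / (i_ (a i s) / i_ g).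
    by field; rewrite a_nz gF.
  exact: HFD.
case=> -> hr /=.
have -> : i_ r / i_ g = (i_ r / i_ (a i s)) * (i_ (a i s) / i_ g).
  by field; rewrite a_nz gF.
exact: HFM.
Qed.

Lemma a_lt_iff i (s t : 'I_k) : (a i s < a i t)%N = (s < t)%N.
Proof.
apply/idP/idP; last exact: ha_incr.
move=> h; rewrite ltnNge; apply/negP; rewrite leq_eqVlt => /orP [/eqP e | lt].
  have : t = s by apply: val_inj.
  by move=> ets; move: h; rewrite ets ltnn.
by have := ha_incr i lt; lia.
Qed.

Lemma coset_elt i s h : h \in HF -> exists t, i_ (a i t) = i_ (a i s) * h.
Proof.
move=> hH; set x0 := i_ (a i s).
have hx0h : x0 * h != 0 by rewrite mulf_neq0 ?a_nz ?HF0.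
have : exists j, a i j = v (x0 * h).
  apply/(coset_char i s); split.
    by rewrite vlt andbT lt0n v_eq0.
  by rewrite vK mulrC mulKf // a_nz.
by case=> t et; exists t; rewrite et vK.
Qed.

Lemma coset_mem i s t : i_ (a i t) / i_ (a i s) \in HF.
Proof. by have [] := (coset_char i s (a i t)).1 (ex_intro _ t erefl). Qed.

Lemma ai_inj : injective (fun u : 'I_m * 'I_k => i_ (a u.1 u.2)).
Proof.
move=> [i s] [i' s'] /= e.
have e' : a i s = a i' s' by apply: nat_inj e; apply: a_lt.
have ii : i = i'.
  apply: ha_distinct => r; split => H.
    have [h1 h2] := (coset_char i s r).1 H.
    by apply/(coset_char i' s'); rewrite -e'.
  have [h1 h2] := (coset_char i' s' r).1 H.
  by apply/(coset_char i s); rewrite e'.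
subst i'; congr (_, _); exact: a_inj e'.
Qed.

Lemma img_nz : [set i_ (a u.1 u.2) | u in [set: 'I_m * 'I_k]] = [set x : F | x != 0].
Proof.
apply/eqP; rewrite eqEcard card_imset; last exact: ai_inj.
rewrite cardsT card_prod !card_ord card_nz; apply/andP; split.
  by apply/subsetP => x /imsetP [u _ ->]; rewrite inE a_nz.
have := prime_gt1 hp; lia.
Qed.

Definition G (x : F) := \prod_(h | (h \in HF) && (v x < v (x * h)%R)%N) (x * (h - 1)).

Lemma inner_prod i (s : 'I_k) :
  \prod_(t < k | (s < t)%N) (i_ (a i t) - i_ (a i s)) = G (i_ (a i s)).
Proof.
set x0 := i_ (a i s).
have x00 : x0 != 0 by apply: a_nz.
have inj : {in [set t : 'I_k | (s < t)%N] &, injective (fun t => i_ (a i t) / x0)}.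
  move=> t t' _ _ /= /(mulIf (invr_neq0 x00)) e; apply: a_inj; apply: nat_inj e; exact: a_lt.
have eS : [set i_ (a i t) / x0 | t in [set t : 'I_k | (s < t)%N]]
          = [set h | (h \in HF) && (v x0 < v (x0 * h)%R)%N].
  apply/setP => h; rewrite [in RHS]inE; apply/imsetP/idP.
    case=> t; rewrite inE => st ->; rewrite coset_mem andTb.
    have -> : x0 * (i_ (a i t) / x0) = i_ (a i t) by rewrite mulrC mulfVK.
    by rewrite /x0 !v_a a_lt_iff.
  case/andP => hH hv; have [t et] := @coset_elt i s h hH.
  exists t; last by rewrite et mulrC mulKf.
  by rewrite inE -(a_lt_iff i) -(v_a i s) -(v_a i t) et.
have -> : G x0 = \prod_(h in [set h | (h \in HF) && (v x0 < v (x0 * h)%R)%N]) (x0 * (h - 1)).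
  by apply: eq_bigl => h; rewrite inE.
rewrite -eS big_imset //; apply: eq_big => [t|t _]; first by rewrite inE.
by rewrite mulrBr mulr1 mulrC mulfVK.
Qed.

Lemma PF_eq : \prod_(i < m) \prod_(s < k) \prod_(t < k | (s < t)%N) (i_ (a i t) - i_ (a i s))
  = \prod_(h in HF) g h.
Proof.
rewrite (eq_bigr (fun i => \prod_(s < k) G (i_ (a i s)))); last first.
  by move=> i _; apply: eq_bigr => s _; exact: inner_prod.
rewrite pair_big /=.
have e : \prod_(x in [set x : F | x != 0]) G x = \prod_(u : 'I_m * 'I_k) G (i_ (a u.1 u.2)).
  rewrite -img_nz big_imset /=; last by move=> u w _ _; apply: ai_inj.
  by apply: eq_bigl => u; rewrite inE.
rewrite -e /G (exchange_big_dep (fun h => h \in HF)) /=; last by move=> x h _ /andP [].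
apply: eq_bigr => h hH; rewrite /g; apply: eq_bigl => x; by rewrite hH andTb !inE.
Qed.

Lemma card_HF : #|HF| = k.
Proof.
pose i0 := Ordinal hm; pose s0 := Ordinal hk; set x0 := i_ (a i0 s0).
have x00 : x0 != 0 by apply: a_nz.
have -> : HF = [set i_ (a i0 j) / x0 | j : 'I_k].
  apply/setP => h; apply/idP/imsetP.
    move=> hH; have [t et] := @coset_elt i0 s0 h hH.
    by exists t => //; rewrite et mulrC mulKf.
  by case=> j _ ->; apply: coset_mem.
rewrite card_imset ?card_ord //.
move=> t t' /= /(mulIf (invr_neq0 x00)) e; apply: a_inj; apply: nat_inj e; exact: a_lt.
Qed.

Lemma main_F :
  (~~ odd k /\ \prod_(i < m) \prod_(s < k) \prod_(t < k | (s < t)%N) (i_ (a i t) - i_ (a i s))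
     = (-1) ^+ (nn %/ 2) * (nn`!)%:R * ((-1) ^+ nn.+1) ^+ ((k - 2) %/ 2)) \/
  (odd k /\ \prod_(i < m) \prod_(s < k) \prod_(t < k | (s < t)%N) (i_ (a i t) - i_ (a i s))
     = ((-1) ^+ nn.+1) ^+ ((k - 1) %/ 2)).
Proof.
rewrite PF_eq (big_setD1 1) ?HF1 //=.
have g1 : g 1 = 1.
  rewrite /g big_pred0 // => x; by rewrite inE mulr1 ltnn andbF.
rewrite g1 mul1r.
set c : F := (-1 : F) ^+ nn.+1.
have key : forall A : {set F}, A \subset HF :\ 1 -> (forall h, h \in A -> h^-1 \in A) ->
    (-1 : F) \notin A -> ~~ odd #|A| /\ \prod_(h in A) g h = c ^+ (#|A| %/ 2).
  move=> A sA cA nA; apply: prod_invol => h hA.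
  have := subsetP sA h hA; rewrite in_setD1 => /andP [h1 hH].
  have h0 : h != 0 by apply: HF0.
  split; [exact: cA hA | | by rewrite invrK | exact: g_pair h0 h1].
  apply/eqP => e.
  have hh : (h - 1) * (h + 1) = 0.
    have : h * h = 1 by rewrite -{1}e mulVf.
    by move=> e2; rewrite mulrDr mulrBl e2 mulr1 mul1r; ring.
  move/eqP: hh; rewrite mulf_eq0 subr_eq0 (negbTE h1) /= addr_eq0 => /eqP em.
  by move: nA; rewrite -em hA.
have cH1 : #|HF :\ 1| = (k - 1)%N by have := cardsD1 1 HF; rewrite HF1 card_HF add1n => ->; rewrite subn1.
case: (boolP ((-1 : F) \in HF)) => hm1.
  left.
  have m1A : (-1 : F) \in HF :\ 1 by rewrite in_setD1 m1_neq1.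
  rewrite (big_setD1 (-1 : F)) //= g_m1.
  have cA : #|HF :\ 1 :\ (-1 : F)| = (k - 2)%N. have := cardsD1 (-1 : F) (HF :\ 1); rewrite m1A cH1 add1n => e; rewrite -[2%N]/(1+1)%N subnDA e subSS subn0 //.
  have sA : HF :\ 1 :\ (-1 : F) \subset HF :\ 1 by apply: subsetDl.
  have clA : forall h, h \in HF :\ 1 :\ (-1 : F) -> h^-1 \in HF :\ 1 :\ (-1 : F).
    move=> h; rewrite !in_setD1 => /and3P [hm2 hn hH]; rewrite HFV // andbT invr_eq1 hn andbT.
    apply/eqP => e1; move: hm2; by rewrite -[h]invrK e1 invrN1 eqxx.
  have nA : (-1 : F) \notin HF :\ 1 :\ (-1 : F) by rewrite in_setD1 eqxx.
  have [o eP] := key _ sA clA nA.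
  rewrite eP cA; split => //.
  move: o; rewrite cA => ho.
  have h2 : (2 <= k)%N by have := cardsD1 (-1 : F) (HF :\ 1); rewrite m1A cH1 add1n; lia.
  by move: ho; rewrite -{2}(subnK h2) oddD /= addbF.
right.
have sA : HF :\ 1 \subset HF :\ 1 by [].
have clA : forall h, h \in HF :\ 1 -> h^-1 \in HF :\ 1.
  by move=> h; rewrite !in_setD1 => /andP [hn hH]; rewrite HFV // andbT invr_eq1 hn.
have nA : (-1 : F) \notin HF :\ 1 by rewrite in_setD1 (negbTE hm1) andbF.
have [o eP] := key _ sA clA nA.
rewrite eP cH1; split => //.
move: o; rewrite cH1 => ho.
by move: ho; rewrite -{2}(subnK hk) oddD /= addbT.
Qed.
End Fp.

Lemma reduce_F (p : nat) (hp : prime p) (x : int) :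
  exists a : nat, (x %% p%:Z)%Z = a%:Z /\ (x%:~R : 'F_p) = a%:R.
Proof.
have p0 : (p%:Z != 0) by rewrite eqz_nat -lt0n prime_gt0.
exists `|(x %% p%:Z)%Z|%N; rewrite gez0_abs ?modz_ge0 //; split => //.
rewrite {1}(divz_eq x p%:Z) rmorphD rmorphM /= -pmulrn (pchar_Fp_0 hp) mulr0 add0r.
have := modz_ge0 x p0; case: (x %% p%:Z)%Z => // n _.
Qed.

Lemma F_modz (p : nat) (hp : prime p) (x y : int) :
  (x%:~R : 'F_p) = y%:~R -> (x = y %[mod p%:Z])%Z.
Proof.
have p0 : (p%:Z != 0) by rewrite eqz_nat -lt0n prime_gt0.
have [a [ha ea]] := reduce_F hp x; have [b [hb eb]] := reduce_F hp y.
rewrite ea eb ha hb => e; congr Posz; apply: (nat_inj hp) e.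
  have := ltz_pmod x (_ : 0 < p%:Z); rewrite ha ltz_nat; apply; by rewrite ltz_nat prime_gt0.
have := ltz_pmod y (_ : 0 < p%:Z); rewrite hb ltz_nat; apply; by rewrite ltz_nat prime_gt0.
Qed.

Local Close Scope ring_scope.
Lemma mod_ne (m : nat) : 0 < m -> (1 + m) %% (2 * m) != 1.
Proof.
move=> hm; case: (ltnP 1 m) => h.
  by rewrite modn_small; lia.
have -> : m = 1 by lia.
by [].
Qed.

Lemma k_odd_mod (p k m : nat) : k * m = p - 1 -> 1 < p -> odd k ->
  p %% (2 * m) = (1 + m) %% (2 * m).
Proof.
move=> hkm hp ko.
have ek : k = k./2 * 2 + 1 by rewrite -[k in LHS]odd_double_half ko -muln2; lia.
have -> : p = k./2 * (2 * m) + (1 + m).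
  have : p = k * m + 1 by lia.
  move=> ->; rewrite {1}ek; ring.
by rewrite modnMDl.
Qed.

Lemma k_even_mod (p k m : nat) : k * m = p - 1 -> 1 < p -> 0 < m -> ~~ odd k ->
  p %% (2 * m) = 1.
Proof.
move=> hkm hp hm ko.
have ek : k = k./2 * 2 by rewrite -[k in LHS]odd_double_half (negbTE ko) -muln2; lia.
have -> : p = k./2 * (2 * m) + 1.
  have : p = k * m + 1 by lia.
  move=> ->; rewrite {1}ek; ring.
by rewrite modnMDl modn_small //; lia.
Qed.

Lemma parity_even (nn j : nat) : 0 < nn -> 0 < j ->
  odd (nn %/ 2 + nn.+1 * (j - 1)) = odd (nn.+1 * j + (nn - 1) %/ 2).
Proof.
move=> hn hj.
have hX : nn.+1 <= nn.+1 * j by rewrite leq_pmulr.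
rewrite mulnBr muln1.
move: hX; set X := nn.+1 * j => hX.
have [q [e | e]] : exists q, nn = q * 2 \/ nn = q * 2 + 1.
  exists nn./2; have := odd_double_half nn; rewrite -muln2; case: (odd nn) => /= h; lia.
  have -> : X + (nn - 1) %/ 2 = (nn %/ 2 + (X - nn.+1)) + q.*2 by rewrite -!muln2; lia.
  by rewrite [in RHS]oddD odd_double addbF.
have -> : X + (nn - 1) %/ 2 = (nn %/ 2 + (X - nn.+1)) + q.+1.*2 by rewrite -!muln2; lia.
by rewrite [in RHS]oddD odd_double addbF.
Qed.

Local Open Scope ring_scope.
Unset Implicit Arguments.

Theorem theorem3p1 (p k m : nat) (a : 'I_m -> 'I_k -> nat)
  (hp : prime p) (hodd : odd p) (hk : (0 < k)%N) (hm : (0 < m)%N)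
  (hkm : (k * m = p - 1)%N)
  (ha_range : forall i j, (1 <= a i j <= p - 1)%N)
  (ha_incr : forall i (s t : 'I_k), (s < t)%N -> (a i s < a i t)%N)
  (ha_coset : forall i, is_coset_of_H p m (fun r => exists j, a i j = r))
  (ha_distinct : forall i1 i2 : 'I_m,
      (forall r, (exists j, a i1 j = r) <-> (exists j, a i2 j = r)) -> i1 = i2) :
  let P : int := \prod_(i < m) \prod_(s < k) \prod_(t < k | (s < t)%N)
                   ((a i t)%:Z - (a i s)%:Z) in
  ((p %% (2 * m))%N = 1%N ->
     (P = (-1) ^+ ((p + 1) %/ 2 * ((p - 1) %/ (2 * m)) + (p - 3) %/ 4)%N
            * ((p - 1) %/ 2)`!%:Z %[mod p%:Z])%Z) /\
  ((p %% (2 * m))%N = ((1 + m) %% (2 * m))%N ->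
     (P = (-1) ^+ ((p + 1) %/ 2 * ((p - 1 - m) %/ (2 * m)))%N %[mod p%:Z])%Z).
Proof.
move=> P.
have hP : (P%:~R : 'F_p) = \prod_(i < m) \prod_(s < k) \prod_(t < k | (s < t)%N)
    (((a i t)%:R : 'F_p) - (a i s)%:R).
  rewrite /P rmorph_prod; apply: eq_bigr => i _; rewrite rmorph_prod; apply: eq_bigr => s _.
  rewrite rmorph_prod; apply: eq_bigr => t _; by rewrite rmorphB /= -!pmulrn.
have p1 : (1 < p)%N := prime_gt1 hp.
have pnn := p_nn hp hodd.
have hn0 : (0 < nn p)%N by have := p_gt2 hp hodd; lia.
have ep1 : ((p + 1) %/ 2 = (nn p).+1)%N by lia.
have mc := main_F hp hodd hk hm hkm ha_range ha_incr ha_coset ha_distinct.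
split => hmod.
  have ke : ~~ odd k.
    apply/negP => ko; have := k_odd_mod hkm p1 ko; rewrite hmod => e.
    by move: (mod_ne hm); rewrite -e eqxx.
  case: mc => [[_ eF] | [ko _]]; last by rewrite ko in ke.
  apply: (F_modz hp).
  rewrite hP eF rmorphM rmorphXn rmorphN1 /= -pmulrn -exprM mulrAC -exprD.
  congr (_ * _).
  rewrite -signr_odd -[RHS]signr_odd; congr (_ ^+ _); congr nat_of_bool.
  set j := k./2.
  have ej : k = (j * 2)%N by rewrite /j muln2 even_halfK.
  have e1 : ((k - 2) %/ 2 = j - 1)%N by lia.
  have e2 : ((p - 1) %/ (2 * m) = j)%N.
    by rewrite -hkm ej -mulnA mulnK // muln_gt0 hm.
  have e3 : ((p - 3) %/ 4 = (nn p - 1) %/ 2)%N by lia.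
  rewrite e1 e2 e3 ep1; apply: parity_even => //; lia.
have ko : odd k.
  apply/negPn/negP => ke; have := k_even_mod hkm p1 hm ke; rewrite hmod => e.
  by move: (mod_ne hm); rewrite e eqxx.
case: mc => [[ke _] | [_ eF]]; first by rewrite ko in ke.
apply: (F_modz hp).
rewrite hP eF rmorphXn rmorphN1 -exprM; congr (_ ^+ _).
rewrite ep1; congr (_ * _)%N.
set j := k./2.
have ej : k = (j * 2 + 1)%N by rewrite /j muln2 -{1}(odd_double_half k) ko addnC.
have -> : (p - 1 - m = j * (2 * m))%N by rewrite -hkm ej mulnDl mul1n addnK mulnA.
rewrite mulnK; last by rewrite muln_gt0 hm.
rewrite ej; lia.
Qed.
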